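(* VD and BC satisfy ballot monotonicity. For each $f\in\{\mathrm{MF},\mathrm{MS},\mathrm{FT}\}$ ballot monotonicity fails: there exist a finite candidate set $C$, a profile $P$, an axis $\triangleleft\in f(P)$ and a ballot $A\in P$ that is not an interval of $\triangleleft$ such that $\triangleleft\notin f(P')$, where $P'$ is obtained from $P$ by replacing (one copy of) $A$ with $A'=\{x\in C:\exists y,z\in A,\ y\trianglelefteq x\trianglelefteq z\}$.
   Context: Let $C$ be a finite set of candidates. An approval ballot is a nonempty subset $A\subseteq C$; a profile is a finite sequence of ballots. An axis is a strict linear order $\triangleleft$ on $C$; $a\trianglelefteq b$ means $a\triangleleft b$ or $a=b$. A ballot $A$ is an interval of $\triangleleft$ if for all $a,b\in A$ and every $c$ with $a\triangleleft c\triangleleft b$ we have $c\in A$. An axis rule $f$ satisfies ballot monotonicity if for every profile $P$, every ballot $A\in P$ and every axis $\triangleleft\in f(P)$ such that $A$ is not an interval of $\triangleleft$, we have $\triangleleft\in f(P')$, where $P'$ is obtained from $P$ by replacing $A$ by $A'=\{x\in C:\exists y,z\in A \text{ with } y\trianglelefteq x\trianglelefteq z\}$. For a cost function $\mathrm{cost}_f$, the scoring rule returns $f(P)=\arg\min_{\triangleleft}\sum_{A\in P}\mathrm{cost}_f(A,\triangleleft)$ over all axes on $C$. The five rules are the scoring rules with costs: $\mathrm{cost}_{\mathrm{VD}}(A,\triangleleft)=0$ if $A$ is an interval of $\triangleleft$ and $1$ otherwise; $\mathrm{cost}_{\mathrm{MF}}(A,\triangleleft)=\min_{x,y\in A,\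 x\trianglelefteq y}\big(|\{z\in A: z\triangleleft x \text{ or } y\triangleleft z\}|+|\{z\notin A: x\triangleleft z\triangleleft y\}|\big)$; $\mathrm{cost}_{\mathrm{BC}}(A,\triangleleft)=|\{b\notin A: a\triangleleft b\triangleleft c \text{ for some } a,c\in A\}|$; $\mathrm{cost}_{\mathrm{MS}}(A,\triangleleft)=\sum_{x\in C\setminus A}\min\big(|\{y\in A:y\triangleleft x\}|,\,|\{y\in A:x\triangleleft y\}|\big)$; $\mathrm{cost}_{\mathrm{FT}}(A,\triangleleft)=\sum_{x\in C\setminus A}|\{y\in A:y\triangleleft x\}|\cdot|\{y\in A:x\triangleleft y\}|$. *)

(* Defs.v *)
From mathcomp Require Import all_boot.
Set Implicit Arguments. Unset Strict Implicit. Unset Printing Implicit Defensive.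

(* Candidates: a finite type C.  An axis is a strict linear order [lt : rel C]
   ("a <| b" is [lt a b]).  A ballot is a set of candidates, a profile a
   finite sequence of ballots (all nonempty). *)

Definition is_axis (C : finType) (lt : rel C) : Prop :=
  (forall a, ~~ lt a a) /\
  (forall a b c, lt a b -> lt b c -> lt a c) /\
  (forall a b, a != b -> lt a b || lt b a).

Definition axle (C : finType) (lt : rel C) (a b : C) : bool := lt a b || (a == b).

Definition is_interval (C : finType) (lt : rel C) (A : {set C}) : bool :=
  [forall a in A, forall b in A, forall c, (lt a c && lt c b) ==> (c \in A)].

Definition hull (C : finType) (lt : rel C) (A : {set C}) : {set C} :=
  [set x | [exists y in A, exists z in A, axle lt y x && axle lt x z]].

Definition valid_profile (C : finType) (P : seq {set C}) : bool :=
  all (fun A => A != set0) P.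

Definition costfun := forall C : finType, rel C -> {set C} -> nat.

Definition total_cost (cost : costfun) (C : finType) (P : seq {set C}) (lt : rel C) : nat :=
  \sum_(A <- P) cost C lt A.

Definition in_rule (cost : costfun) (C : finType) (P : seq {set C}) (lt : rel C) : Prop :=
  is_axis lt /\
  (forall lt' : rel C, is_axis lt' -> total_cost cost P lt <= total_cost cost P lt').

Definition cost_VD : costfun := fun C lt A => if is_interval lt A then 0 else 1.

(* min over x,y in A with x <|= y; the identity #|C| of minn is never the
   result when A is nonempty (each candidate value is <= #|C| anyway). *)
Definition cost_MF : costfun := fun C lt A =>
  \big[minn/#|C|]_(x in A) \big[minn/#|C|]_(y in A | axle lt x y)
     (#|[set z in A | lt z x || lt y z]| + #|[set z | (z \notin A) && (lt x z && lt z y)]|).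

Definition cost_BC : costfun := fun C lt A =>
  #|[set b | (b \notin A) && [exists a in A, exists c in A, lt a b && lt b c]]|.

Definition cost_MS : costfun := fun C lt A =>
  \sum_(x in ~: A) minn #|[set y in A | lt y x]| #|[set y in A | lt x y]|.

Definition cost_FT : costfun := fun C lt A =>
  \sum_(x in ~: A) #|[set y in A | lt y x]| * #|[set y in A | lt x y]|.

Definition ballot_monotone (cost : costfun) : Prop :=
  forall (C : finType) (P : seq {set C}), valid_profile P ->
  forall (i : nat), i < size P ->
  forall lt : rel C, in_rule cost P lt ->
  ~~ is_interval lt (nth set0 P i) ->
  in_rule cost (set_nth set0 P i (hull lt (nth set0 P i))) lt.

Definition monotonicity_counterexample (cost : costfun) : Prop :=
  exists (C : finType) (P : seq {set C}) (i : nat) (lt : rel C),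
    [/\ valid_profile P, i < size P, in_rule cost P lt,
        ~~ is_interval lt (nth set0 P i) &
        ~ in_rule cost (set_nth set0 P i (hull lt (nth set0 P i))) lt].

(* Main.v *)
Require Import Defs.
From mathcomp Require Import all_boot.
From mathcomp Require Import zify.
From Stdlib Require Import FunctionalExtensionality.
Set Implicit Arguments. Unset Strict Implicit. Unset Printing Implicit Defensive.

Lemma sum_set_nth (T : Type) (f : T -> nat) (x0 : T) (P : seq T) i y :
  i < size P ->
  \sum_(A <- set_nth x0 P i y) f A + f (nth x0 P i) = \sum_(A <- P) f A + f y.
Proof.
elim: P i => [|a P IH] [|i] //= Hi.
- rewrite !big_cons; lia.
- rewrite !big_cons -addnA IH //; lia.
Qed.

Section Hull.
Variables (C : finType) (lt : rel C).
Hypothesis Hax : is_axis lt.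

Lemma hull_conv A a b c : a \in hull lt A -> b \in hull lt A -> lt a c -> lt c b ->
  c \in hull lt A.
Proof.
case: Hax => irr [tr tot].
rewrite !inE => /existsP[y /andP[yA /existsP[z /andP[zA /andP[ya az]]]]].
move=> /existsP[y' /andP[yA' /existsP[z' /andP[zA' /andP[yb bz]]]]] ac cb.
apply/existsP; exists y; rewrite yA /=; apply/existsP; exists z'; rewrite zA' /=.
apply/andP; split; apply/orP; left.
- by case/orP: ya => [H|/eqP->] //; apply: tr H ac.
- by case/orP: bz => [H|/eqP<-] //; apply: tr cb H.
Qed.

Lemma hull_interval A : is_interval lt (hull lt A).
Proof.
apply/forallP => a; apply/implyP => Ha; apply/forallP => b; apply/implyP => Hb.
apply/forallP => c; apply/implyP => /andP[ac cb]; exact: hull_conv Ha Hb ac cb.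
Qed.
End Hull.

Lemma sub_hull (C : finType) (lt : rel C) (A : {set C}) x : x \in A -> x \in hull lt A.
Proof.
move=> xA; rewrite inE; apply/existsP; exists x; rewrite xA /=.
apply/existsP; exists x; by rewrite xA /axle eqxx !orbT.
Qed.

Lemma VD_mono : ballot_monotone cost_VD.
Proof.
move=> C P _ i Hi lt [Hax Hmin] Hni; split => // lt' Hax'.
have E1 := @sum_set_nth _ (cost_VD lt) set0 P i (hull lt (nth set0 P i)) Hi.
have E2 := @sum_set_nth _ (cost_VD lt') set0 P i (hull lt (nth set0 P i)) Hi.
have M := Hmin lt' Hax'.
have H1 : cost_VD lt (nth set0 P i) = 1 by rewrite /cost_VD (negbTE Hni).
have H2 : cost_VD lt (hull lt (nth set0 P i)) = 0 by rewrite /cost_VD (hull_interval Hax).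
move: E1 E2 M; rewrite /total_cost H1 H2.
have : cost_VD lt' (nth set0 P i) <= 1 by rewrite /cost_VD; case: ifP.
lia.
Qed.

Lemma BC_eq (C : finType) (lt : rel C) A :
  cost_BC lt A = #|hull lt A :\: A|.
Proof.
rewrite /cost_BC; apply: eq_card => b; rewrite !inE.
case bA: (b \in A) => //=.
apply/existsP/existsP => [[a /andP[aA /existsP[c /andP[cA /andP[ab bc]]]]]|
                          [a /andP[aA /existsP[c /andP[cA /andP[ab bc]]]]]].
- exists a; rewrite aA /=; apply/existsP; exists c; by rewrite cA /axle ab bc.
- exists a; rewrite aA /=; apply/existsP; exists c; rewrite cA /=.
  move: ab bc; rewrite /axle.
  have ->: (a == b) = false by apply/eqP => E; rewrite -E aA in bA.
  have ->: (b == c) = false by apply/eqP => E; rewrite E cA in bA.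
  by rewrite !orbF => -> ->.
Qed.

Lemma BC_hull0 (C : finType) (lt : rel C) A : is_axis lt -> cost_BC lt (hull lt A) = 0.
Proof.
move=> Hax; apply/eqP; rewrite cards_eq0; apply/eqP/setP => b; rewrite in_set in_set0.
apply/negbTE/negP => /andP[bH /existsP[a /andP[aH /existsP[c /andP[cH /andP[ab bc]]]]]].
by have := hull_conv Hax aH cH ab bc; rewrite (negbTE bH).
Qed.

Lemma BC_le (C : finType) (lt lt' : rel C) A :
  cost_BC lt' A <= cost_BC lt' (hull lt A) + #|hull lt A :\: A|.
Proof.
rewrite /cost_BC; apply: leq_trans (leq_card_setU _ _).
apply: subset_leq_card; apply/subsetP => b; rewrite in_setU in_setD !in_set.
move=> /andP[bA /existsP[a /andP[aA /existsP[c /andP[cA abc]]]]].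
case bH: (b \in hull lt A); move: bH; rewrite inE => ->; first by rewrite bA orbT.
apply/orP; left; apply/existsP; exists a; rewrite sub_hull //=.

apply/existsP; exists c; by rewrite sub_hull.
Qed.

Lemma BC_mono : ballot_monotone cost_BC.
Proof.
move=> C P _ i Hi lt [Hax Hmin] Hni; split => // lt' Hax'.
have E1 := @sum_set_nth _ (cost_BC lt) set0 P i (hull lt (nth set0 P i)) Hi.
have E2 := @sum_set_nth _ (cost_BC lt') set0 P i (hull lt (nth set0 P i)) Hi.
have M := Hmin lt' Hax'.
have L := BC_le lt lt' (nth set0 P i).
move: E1 E2 M L; rewrite /total_cost BC_hull0 // BC_eq.
lia.
Qed.

Definition mk n (q : pred nat) : {set 'I_n} := [set x : 'I_n | q (val x)].
Definition ltN n (R : rel nat) : rel 'I_n := fun a b => R (val a) (val b).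
Arguments mk : clear implicits.
Arguments ltN : clear implicits.

Lemma big_foldr (op : nat -> nat -> nat) d (r : seq nat) (g : nat -> nat) :
  \big[op/d]_(i <- r) g i = foldr op d (map g r).
Proof. by elim: r => [|a r IH]; rewrite ?big_nil ?big_cons //= IH. Qed.

Lemma Lbig n (op : nat -> nat -> nat) d (q : pred nat) (g : nat -> nat)
  (P : pred 'I_n) (F : 'I_n -> nat) :
  (forall x, P x = q (val x)) -> (forall x, q (val x) -> F x = g (val x)) ->
  \big[op/d]_(x | P x) F x = foldr op d [seq g k | k <- iota 0 n & q k].
Proof.
move=> HP HF.
rewrite (eq_bigl (fun x : 'I_n => q x)) //.
rewrite (eq_bigr (fun x : 'I_n => g x)); last by move=> x /HF.
by rewrite -(big_mkord q g) /index_iota subn0 -big_filter big_foldr.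
Qed.

Lemma Lcard n (S : {set 'I_n}) (q : pred nat) :
  (forall x, (x \in S) = q (val x)) -> #|S| = count q (iota 0 n).
Proof.
move=> H; rewrite -sum1_card (@Lbig n addn 0 q (fun _ => 1)) //.
by elim: (iota 0 n) => //= a r IH; case: (q a) => //=; rewrite IH.
Qed.

Definition msN n (R : rel nat) (q : pred nat) : nat :=
  foldr addn 0 [seq minn (count (fun y => q y && R y x) (iota 0 n))
                          (count (fun y => q y && R x y) (iota 0 n)) | x <- iota 0 n & ~~ q x].

Lemma msE n R q : cost_MS (ltN n R) (mk n q) = msN n R q.
Proof.
rewrite /cost_MS /msN; apply: Lbig => [x|x _]; first by rewrite !inE.
by congr minn; apply: Lcard => y; rewrite !inE.
Qed.

Definition ftN n (R : rel nat) (q : pred nat) : nat :=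
  foldr addn 0 [seq (count (fun y => q y && R y x) (iota 0 n)) *
                          (count (fun y => q y && R x y) (iota 0 n)) | x <- iota 0 n & ~~ q x].

Lemma ftE n R q : cost_FT (ltN n R) (mk n q) = ftN n R q.
Proof.
rewrite /cost_FT /ftN; apply: Lbig => [x|x _]; first by rewrite !inE.
by congr muln; apply: Lcard => y; rewrite !inE.
Qed.

Definition mfN n (R : rel nat) (q : pred nat) : nat :=
  foldr minn n [seq foldr minn n [seq
     count (fun z => q z && (R z x || R y z)) (iota 0 n) +
     count (fun z => ~~ q z && (R x z && R z y)) (iota 0 n)
   | y <- iota 0 n & q y && (R x y || (x == y))] | x <- iota 0 n & q x].

Lemma mfE n R q : cost_MF (ltN n R) (mk n q) = mfN n R q.
Proof.
rewrite /cost_MF card_ord /mfN; apply: Lbig => [x|x _]; first by rewrite !inE.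
apply: Lbig => [y|y _]; first by rewrite !inE /axle /ltN val_eqE.
by congr addn; apply: Lcard => z; rewrite !inE.
Qed.

Lemma totE (cost : costfun) (costN : rel nat -> pred nat -> nat) n R (Qs : seq (pred nat)) :
  (forall R q, cost _ (ltN n R) (mk n q) = costN R q) ->
  total_cost cost [seq mk n q | q <- Qs] (ltN n R) = sumn [seq costN R q | q <- Qs].
Proof.
move=> H; rewrite /total_cost big_map.
by elim: Qs => [|q Qs IH]; rewrite ?big_nil ?big_cons //= H IH.
Qed.

Lemma axis_of_inj n (f : nat -> nat) :
  (forall i j, i < n -> j < n -> f i = f j -> i = j) ->
  is_axis (ltN n (fun i j => f i < f j)).
Proof.
move=> Hf; split; first by move=> a; rewrite /ltN ltnn.
split; first by move=> a b c; rewrite /ltN; apply: ltn_trans.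
move=> a b Hab; rewrite /ltN -neq_ltn; apply/eqP => E.
by case/eqP: Hab; apply/val_inj; apply: Hf => //; apply: ltn_ord.
Qed.

Lemma axis_rank n (lt : rel 'I_n.+1) : is_axis lt ->
  exists2 s, s \in permutations (iota 0 n.+1) & lt = ltN n.+1 (fun i j => nth 0 s i < nth 0 s j).
Proof.
case=> irr [tr tot].
pose r (x : 'I_n.+1) := #|[set y | lt y x]|.
have lt_r a b : lt a b -> r a < r b.
  move=> ab; apply: proper_card; apply/properP; split.
    by apply/subsetP => y; rewrite !inE => ya; apply: tr ya ab.
  by exists a; rewrite !inE ?ab ?(negbTE (irr a)).
have rlt a b : lt a b = (r a < r b).
  apply/idP/idP; first exact: lt_r.
  move=> H; case: (eqVneq a b) => [E|Hne]; first by rewrite E ltnn in H.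
  case/orP: (tot a b Hne) => // /lt_r H'.
  by have := ltn_trans H H'; rewrite ltnn.
have r_inj : injective r.
  move=> a b E; apply/eqP; apply/negP => /negP Hne.
  by case/orP: (tot a b Hne); rewrite rlt E ltnn.
have r_lt a : r a < n.+1.
  rewrite -[n.+1]card_ord -cardsT; apply: proper_card; rewrite properT.
  by apply/eqP => E; have := in_setT a; rewrite -E inE (negbTE (irr a)).
pose s := [seq r (inord k) | k <- iota 0 n.+1].
have ns k : k < n.+1 -> nth 0 s k = r (inord k).
  by move=> Hk; rewrite (nth_map 0) ?size_iota // nth_iota.
exists s.
  rewrite mem_permutations.
  have us : uniq s.
    rewrite map_inj_in_uniq ?iota_uniq // => i j; rewrite !mem_iota /= => Hi Hj.
    by move/r_inj => E; rewrite -(inordK Hi) -(inordK Hj) E.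
  apply: uniq_perm; rewrite ?iota_uniq //.
  have Hsub : {subset s <= iota 0 n.+1}.
    by move=> k /mapP[i _ ->]; rewrite mem_iota /= r_lt.
  have Hsz : size (iota 0 n.+1) <= size s by rewrite size_map.
  by have [_ H] := uniq_min_size us Hsub Hsz.
apply: functional_extensionality => a; apply: functional_extensionality => b.
by rewrite /ltN !ns ?ltn_ord // !inord_val rlt.
Qed.

Lemma in_rule_check (cost : costfun) (costN : nat -> rel nat -> pred nat -> nat) n
  (Qs : seq (pred nat)) (R0 : rel nat) :
  (forall R q, cost _ (ltN n.+1 R) (mk n.+1 q) = costN n.+1 R q) ->
  is_axis (ltN n.+1 R0) ->
  all (fun s => sumn [seq costN n.+1 R0 q | q <- Qs] <=
                sumn [seq costN n.+1 (fun i j => nth 0 s i < nth 0 s j) q | q <- Qs])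
      (permutations (iota 0 n.+1)) ->
  in_rule cost [seq mk n.+1 q | q <- Qs] (ltN n.+1 R0).
Proof.
move=> HE Hax /allP Hall; split => // lt' /axis_rank [s Hs ->].
rewrite !(@totE cost (costN n.+1)) //; exact: Hall.
Qed.

Lemma not_in_rule (cost : costfun) (costN : nat -> rel nat -> pred nat -> nat) n
  (Qs : seq (pred nat)) (R0 : rel nat) (s : seq nat) :
  (forall R q, cost _ (ltN n R) (mk n q) = costN n R q) ->
  uniq s -> size s = n ->
  sumn [seq costN n (fun i j => nth 0 s i < nth 0 s j) q | q <- Qs] <
    sumn [seq costN n R0 q | q <- Qs] ->
  ~ in_rule cost [seq mk n q | q <- Qs] (ltN n R0).
Proof.
move=> HE us ss Hlt [_ /(_ (ltN n (fun i j => nth 0 s i < nth 0 s j)))].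
rewrite !(@totE cost (costN n)) // leqNgt Hlt => H; apply: notF; apply: H.
apply: axis_of_inj => i j Hi Hj /eqP; rewrite nth_uniq ?ss //; by move/eqP.
Qed.

Lemma valid_mk n (Qs : seq (pred nat)) :
  all (fun q => has q (iota 0 n)) Qs -> valid_profile [seq mk n q | q <- Qs].
Proof.
elim: Qs => //= q Qs IH /andP[/hasP[k Hk qk] /IH ->]; rewrite andbT.
apply/set0Pn; rewrite mem_iota /= in Hk; exists (Ordinal Hk); by rewrite inE.
Qed.

Definition ltn0 : rel nat := fun i j => i < j.

Lemma hullE n (q : pred nat) lo hi : q lo -> q hi -> (forall k, q k -> lo <= k <= hi) -> hi < n ->
  hull (ltN n ltn0) (mk n q) = mk n (fun k => lo <= k <= hi).
Proof.
move=> ql qh Hb hn; have ln : lo < n by have := Hb _ qh; lia.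
have ax (a b : 'I_n) : axle (ltN n ltn0) a b = (val a <= val b).
  rewrite /axle /ltN /ltn0 -val_eqE /=; lia.
apply/setP => x; rewrite !inE; apply/existsP/idP.
- case=> y /andP[]; rewrite inE => qy /existsP[z /andP[]]; rewrite inE => qz.
  rewrite !ax => /andP[yx xz]; have := Hb _ qy; have := Hb _ qz; lia.
- move=> /andP[lx xh]; exists (Ordinal ln); rewrite inE ql /=.
  apply/existsP; exists (Ordinal hn); by rewrite inE qh /= !ax /= lx xh.
Qed.

Lemma not_intervalN n (q : pred nat) a b c : a < c -> c < b -> b < n ->
  q a -> q b -> ~~ q c -> ~~ is_interval (ltN n ltn0) (mk n q).
Proof.
move=> ac cb bn qa qb qc.
have an : a < n by lia.
have cn : c < n by lia.
apply/negP => /forallP/(_ (Ordinal an)); rewrite inE qa /= => /forallP/(_ (Ordinal bn)).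
rewrite inE qb /= => /forallP/(_ (Ordinal cn)); rewrite /ltN /ltn0 /= ac cb inE /=.
by rewrite (negbTE qc).
Qed.

Lemma bnd (s : seq nat) lo hi : all (fun k => lo <= k <= hi) s ->
  forall k, (fun k => k \in s) k -> lo <= k <= hi.
Proof. by move=> /allP H k /H. Qed.

Lemma ax0 n : is_axis (ltN n ltn0).
Proof. exact: (@axis_of_inj n id). Qed.

Definition QsMS : seq (pred nat) :=
  [:: (fun k => k \in [:: 0; 1; 2]); (fun k => k \in [:: 0; 2; 3; 4]); (fun k => k \in [:: 1; 3; 4])].

Lemma MS_cex : monotonicity_counterexample cost_MS.
Proof.
exists ('I_5 : finType), [seq mk 5 q | q <- QsMS], 1, (ltN 5 ltn0); split.
- by apply: valid_mk; vm_compute.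
- by [].
- apply: (@in_rule_check cost_MS msN 4) => //; solve [exact: msE | exact: ax0 | by vm_compute].
- by apply: (@not_intervalN 5 _ 0 2 1).
- rewrite /= (@hullE 5 _ 0 4) //; last by apply: bnd.
  apply: (@not_in_rule cost_MS msN 5 [:: (fun k => k \in [:: 0; 1; 2]); (fun k => 0 <= k <= 4); (fun k => k \in [:: 1; 3; 4])] ltn0 [:: 0; 2; 1; 3; 4]) => //;
    solve [exact: msE | by vm_compute].
Qed.

Definition QsFT : seq (pred nat) :=
  [:: (fun k => k \in [:: 0; 2; 3; 4]); (fun k => k \in [:: 0; 1; 2; 3]);
      (fun k => k \in [:: 0; 1; 4]); (fun k => k \in [:: 1; 2; 3; 4])].

Lemma FT_cex : monotonicity_counterexample cost_FT.
Proof.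
exists ('I_5 : finType), [seq mk 5 q | q <- QsFT], 0, (ltN 5 ltn0); split.
- by apply: valid_mk; vm_compute.
- by [].
- apply: (@in_rule_check cost_FT ftN 4) => //; solve [exact: ftE | exact: ax0 | by vm_compute].
- by apply: (@not_intervalN 5 _ 0 2 1).
- rewrite /= (@hullE 5 _ 0 4) //; last by apply: bnd.
  apply: (@not_in_rule cost_FT ftN 5 [:: (fun k => 0 <= k <= 4); (fun k => k \in [:: 0; 1; 2; 3]);
      (fun k => k \in [:: 0; 1; 4]); (fun k => k \in [:: 1; 2; 3; 4])] ltn0 [:: 0; 2; 3; 4; 1]) => //;
    solve [exact: ftE | by vm_compute].
Qed.

Definition QsMF : seq (pred nat) :=
  [:: (fun k => k \in [:: 1; 2]); (fun k => k \in [:: 3; 4]);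
      (fun k => k \in [:: 0; 1; 4]); (fun k => k \in [:: 0; 2; 3])].

Lemma MF_cex : monotonicity_counterexample cost_MF.
Proof.
exists ('I_5 : finType), [seq mk 5 q | q <- QsMF], 2, (ltN 5 ltn0); split.
- by apply: valid_mk; vm_compute.
- by [].
- apply: (@in_rule_check cost_MF mfN 4) => //; solve [exact: mfE | exact: ax0 | by vm_compute].
- by apply: (@not_intervalN 5 _ 1 4 2).
- rewrite /= (@hullE 5 _ 0 4) //; last by apply: bnd.
  apply: (@not_in_rule cost_MF mfN 5 [:: (fun k => k \in [:: 1; 2]); (fun k => k \in [:: 3; 4]);
      (fun k => 0 <= k <= 4); (fun k => k \in [:: 0; 2; 3])] ltn0 [:: 2; 0; 1; 3; 4]) => //;
    solve [exact: mfE | by vm_compute].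
Qed.

Theorem mainTheorem6 :
  [/\ ballot_monotone cost_VD, ballot_monotone cost_BC,
      monotonicity_counterexample cost_MF,
      monotonicity_counterexample cost_MS &
      monotonicity_counterexample cost_FT].
Proof.
split; [exact: VD_mono | exact: BC_mono | exact: MF_cex | exact: MS_cex | exact: FT_cex].
Qed.
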